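(* Let $G$ be a 3-symmetric graph on 16 vertices. Then the clique number $\omega(G)$ satisfies $3\le \omega(G)\le 8$, and the maximum degree of $G$ is at least $8$.
   Context: All graphs are finite and simple. For a graph $G$ on $n$ vertices and a graph $F$ on $k$ vertices, the density $t(F,G)$ is the number of $k$-element subsets $S\subseteq V(G)$ whose induced subgraph is isomorphic to $F$, divided by $\binom{n}{k}$. A graph $G$ with at least 3 vertices is 3-symmetric if $t(K_3,G)=1/8$, $t(P_3,G)=3/8$, $t(K_2\cup K_1,G)=3/8$ and $t(\overline{K_3},G)=1/8$, where $K_3$ is the triangle, $P_3$ the path with 3 vertices and 2 edges, $K_2\cup K_1$ the 3-vertex graph with exactly one edge, and $\overline{K_3}$ the 3-vertex graph with no edges. *)

(* Defs.v *)
From HB Require Import structures.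
From mathcomp Require Import all_boot all_order all_algebra.
Set Implicit Arguments. Unset Strict Implicit. Unset Printing Implicit Defensive.

Definition simple_graph (T : finType) (e : rel T) : Prop :=
  symmetric e /\ irreflexive e.

Definition induced_edges (T : finType) (e : rel T) (S : {set T}) : nat :=
  #|[set P : {set T} | (P \subset S) && (#|P| == 2) &&
       [exists x, exists y, (P == [set x; y]) && e x y]]|.

(* number of k-vertex subsets inducing a 3-vertex graph with exactly m edges;
   a 3-vertex simple graph is determined up to isomorphism by its edge count:
   0 edges = complement of K3, 1 = K2 u K1, 2 = P3, 3 = K3. *)
Definition count3 (T : finType) (e : rel T) (m : nat) : nat :=
  #|[set S : {set T} | (#|S| == 3) && (induced_edges e S == m)]|.

Definition t3 (T : finType) (e : rel T) (m : nat) : rat :=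
  ((count3 e m)%:R / ('C(#|T|, 3))%:R)%R.

Definition three_symmetric (T : finType) (e : rel T) : Prop :=
  (3 <= #|T|)%N /\
  t3 e 3 = (1 / 8)%R /\ t3 e 2 = (3 / 8)%R /\ t3 e 1 = (3 / 8)%R /\ t3 e 0 = (1 / 8)%R.

Definition clique_number (T : finType) (e : rel T) : nat :=
  \max_(S : {set T} | [forall x in S, forall y in S, (x != y) ==> e x y]) #|S|.

Definition degree (T : finType) (e : rel T) (x : T) : nat := #|[set y | e x y]|.

Definition max_degree (T : finType) (e : rel T) : nat := \max_(x : T) degree e x.

(* Main.v *)
Require Import Defs.
From HB Require Import structures.
From mathcomp Require Import all_boot all_order all_algebra.
From mathcomp Require Import lra.
Import GRing.Theory Num.Theory.

Definition edgeP {T : finType} (e : rel T) (P : {set T}) : bool :=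
  [exists x, exists y, (P == [set x; y]) && e x y].

Lemma card_sumb (T : finType) (p : pred T) :
  #|[set x | p x]| = \sum_x (p x : nat).
Proof.
rewrite -sum1dep_card big_mkcond /=; apply: eq_bigr => x _; by case: (p x).
Qed.

Lemma ie_sum (T : finType) (e : rel T) (S : {set T}) :
  induced_edges e S = \sum_(P : {set T}) ((P \subset S) && (#|P| == 2) && edgeP e P : nat).
Proof. by rewrite /induced_edges card_sumb. Qed.

Lemma ie_le3 (T : finType) (e : rel T) (S : {set T}) :
  #|S| = 3 -> (induced_edges e S <= 3)%N.
Proof.
move=> h3; rewrite /induced_edges.
apply: (@leq_trans #|[set P : {set T} | P \subset S & #|P| == 2]|).
  apply: subset_leq_card; apply/subsetP => P; rewrite !inE => /andP[/andP[-> ->] _] //.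
by rewrite cards_draws h3.
Qed.

Lemma pair_edge (T : finType) (e : rel T) (x y : T) :
  simple_graph e -> edgeP e [set x; y] -> e x y.
Proof.
move=> [sym irr] /existsP[a /existsP[b /andP[/eqP E eab]]].
have ha : a \in [set x; y] by rewrite E set21.
have hb : b \in [set x; y] by rewrite E set22.
move: ha hb eab; rewrite !inE => /orP[]/eqP-> /orP[]/eqP->; rewrite ?irr //.
by rewrite sym.
Qed.

Lemma ie3_clique (T : finType) (e : rel T) (S : {set T}) :
  simple_graph e -> #|S| = 3 -> induced_edges e S = 3 ->
  forall x y, x \in S -> y \in S -> x != y -> e x y.
Proof.
move=> sg h3 hie x y xS yS xy.
set Q := [set P : {set T} | (P \subset S) && (#|P| == 2) && edgeP e P].
set D := [set P : {set T} | P \subset S & #|P| == 2].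
have QD : Q = D.
  apply/eqP; rewrite eqEcard; apply/andP; split.
    by apply/subsetP => P; rewrite !inE => /andP[/andP[-> ->] _].
  by rewrite cards_draws h3; move: hie; rewrite /induced_edges -/Q => ->.
have : [set x; y] \in D.
  rewrite inE cards2 xy; apply/andP; split=> //.
  by apply/subsetP => z; rewrite !inE => /orP[]/eqP->.
rewrite -QD inE => /andP[_]; exact: pair_edge.
Qed.

Lemma clique_ie (T : finType) (e : rel T) (S R : {set T}) :
  (forall x y, x \in S -> y \in S -> x != y -> e x y) ->
  #|R| = 3 -> R \subset S -> induced_edges e R = 3.
Proof.
move=> cl h3 RS.
rewrite /induced_edges.
have -> : [set P : {set T} | (P \subset R) && (#|P| == 2) &&
       [exists x, exists y, (P == [set x; y]) && e x y]] =
       [set P : {set T} | P \subset R & #|P| == 2].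
  apply/setP => P; rewrite !inE; apply/andb_idr.
  move=> /andP[sub /cards2P[x [y [xy EP]]]].
  apply/existsP; exists x; apply/existsP; exists y; rewrite EP eqxx /=.
  apply: cl xy; apply: (subsetP RS); apply: (subsetP sub); by rewrite EP !inE eqxx ?orbT.
by rewrite cards_draws h3.
Qed.

Lemma supersets (T : finType) (P : {set T}) :
  #|P| = 2 -> #|T| = 16 -> #|[set S : {set T} | (#|S| == 3) && (P \subset S)]| = 14.
Proof.
move=> hP hT.
have -> : [set S : {set T} | (#|S| == 3) && (P \subset S)] = [set x |: P | x in ~: P].
  apply/setP => S; rewrite inE; apply/idP/imsetP.
    move=> /andP[/eqP h3 sub].
    have : #|S :\: P| == 1 by rewrite cardsD (setIidPr sub) h3 hP.
    case/cards1P => x hx.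
    have : x \in S :\: P by rewrite hx set11.
    rewrite !inE => /andP[xP _]; exists x; first by rewrite inE.
    by rewrite -{1}(setID S P) (setIidPr sub) hx setUC.
  case=> x; rewrite inE => hx ->.
  by rewrite cardsU1 hx hP subsetUr.
rewrite card_in_imset.
  have := cardsC P; rewrite hT hP => h; by apply/eqP; rewrite -(eqn_add2l 2) h.
move=> x y; rewrite !inE => hx hy E.
have : x \in y |: P by rewrite -E setU11.
rewrite in_setU1 => /orP[/eqP //|]; by rewrite (negbTE hx).
Qed.

Lemma sum_by_count (T : finType) (e : rel T) :
  \sum_(S : {set T}) (#|S| == 3) * induced_edges e S = \sum_(m < 4) m * count3 e m.
Proof.
transitivity (\sum_(S : {set T}) \sum_(m < 4) m * ((#|S| == 3) && (induced_edges e S == m))).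
  apply: eq_bigr => S _; case h: (#|S| == 3) => /=.
    have := @ie_le3 T e S (eqP h).
    case: (induced_edges e S) => [|[|[|[|k]]]] // _; by rewrite !big_ord_recr big_ord0 /=.
  by rewrite mul0n big1 // => m _; rewrite muln0.
rewrite exchange_big; apply: eq_bigr => m _; rewrite -big_distrr /=; congr (_ * _).
by rewrite /count3 card_sumb.
Qed.

Lemma sum_by_pairs (T : finType) (e : rel T) : #|T| = 16 ->
  \sum_(S : {set T}) (#|S| == 3) * induced_edges e S =
  14 * \sum_(P : {set T}) ((#|P| == 2) && edgeP e P : nat).
Proof.
move=> hT.
transitivity (\sum_(S : {set T}) \sum_(P : {set T})
   ((#|S| == 3) && ((P \subset S) && (#|P| == 2) && edgeP e P) : nat)).
  apply: eq_bigr => S _; rewrite ie_sum big_distrr; apply: eq_bigr => P _; by case: (#|S| == 3); case: (_ && edgeP e P).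
rewrite exchange_big big_distrr; apply: eq_bigr => P _.
case h: ((#|P| == 2) && edgeP e P).
  have /andP[/eqP h2 _] := h.
  rewrite /= muln1 -(@supersets T P h2 hT) card_sumb; apply: eq_bigr => S _.
  by rewrite -andbA h andbT.
rewrite /= muln0 big1 // => S _; move: h; case: (P \subset S); case: (#|P| == 2); case: (edgeP e P); rewrite ?andbF ?andbT //.
Qed.

Lemma deg_sum (T : finType) (e : rel T) : simple_graph e ->
  \sum_x degree e x = 2 * \sum_(P : {set T}) ((#|P| == 2) && edgeP e P : nat).
Proof.
move=> [sym irr].
have degE : forall x, degree e x =
   \sum_(P : {set T}) (((#|P| == 2) && edgeP e P) && (x \in P) : nat).
  move=> x; rewrite -card_sumb /degree.
  have -> : [set P : {set T} | ((#|P| == 2) && edgeP e P) && (x \in P)] =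
            [set [set x; y] | y in [set y | e x y]].
    apply/setP => P; rewrite inE; apply/idP/imsetP.
      move=> /andP[/andP[_ /existsP[a /existsP[b /andP[/eqP EP eab]]]] xP].
      move: xP; rewrite EP !inE => /orP[]/eqP ->.
        by exists b; rewrite ?inE.
      by exists a; [rewrite inE sym | rewrite setUC].
    case=> y; rewrite inE => exy ->.
    have xy : x != y by apply/eqP => E; rewrite E irr in exy.
    rewrite cards2 xy set21 andbT /=.
    by apply/existsP; exists x; apply/existsP; exists y; rewrite eqxx exy.
  rewrite card_in_imset // => y1 y2; rewrite !inE => e1 e2 E.
  have : y1 \in [set x; y2] by rewrite -E set22.
  rewrite !inE => /orP[/eqP E1|/eqP //].
  by rewrite E1 irr in e1.
rewrite (eq_bigr _ (fun x _ => degE x)) exchange_big big_distrr; apply: eq_bigr => P _.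
case h: ((#|P| == 2) && edgeP e P) => /=.
  have /andP[/eqP h2 _] := h.
  rewrite muln1 -h2.
  by rewrite -card_sumb; apply: eq_card => z; rewrite inE.
by rewrite muln0 big1.
Qed.

Lemma cnt (T : finType) (e : rel T) (m c : nat) (q : rat) :
  #|T| = 16 -> t3 e m = q -> (c%:R / 560%:R = q)%R -> count3 e m = c.
Proof.
move=> hT ht hq; move: ht; rewrite /t3 hT.
have -> : 'C(16, 3) = 560 by [].
rewrite -hq => h; apply/eqP; rewrite -(eqr_nat rat); apply/eqP.
lra.
Qed.

Theorem mainTheorem19 (T : finType) (e : rel T) :
  simple_graph e -> #|T| = 16 -> three_symmetric e ->
  (3 <= clique_number e <= 8)%N /\ (8 <= max_degree e)%N.
Proof.
move=> sg hT [_ [h3 [h2 [h1 h0]]]].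
have c3 : count3 e 3 = 70 by apply: cnt hT h3 _; lra.
have c2 : count3 e 2 = 210 by apply: cnt hT h2 _; lra.
have c1 : count3 e 1 = 210 by apply: cnt hT h1 _; lra.
have c0 : count3 e 0 = 70 by apply: cnt hT h0 _; lra.
have E60 : \sum_(P : {set T}) ((#|P| == 2) && edgeP e P : nat) = 60.
  have := @sum_by_pairs T e hT; rewrite sum_by_count !big_ord_recr big_ord0 /= c0 c1 c2 c3.
  by move=> h; apply/eqP; rewrite -(@eqn_pmul2l 14) // -h.
split.
  apply/andP; split.
    have : (0 < count3 e 3)%N by rewrite c3.
    rewrite card_gt0 => /set0Pn[S]; rewrite inE => /andP[/eqP S3 /eqP Sie].
    rewrite -S3; apply: leq_bigmax_cond.
    apply/forall_inP => x xS; apply/forall_inP => y yS; apply/implyP.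
    exact: (@ie3_clique T e S sg S3) Sie x y xS yS.
  apply/bigmax_leqP => S /forall_inP cl.
  have cl' : forall x y, x \in S -> y \in S -> x != y -> e x y.
    by move=> x y xS yS; move/forall_inP: (cl x xS) => /(_ y yS) /implyP.
  rewrite leqNgt; apply/negP => h9.
  have : ('C(#|S|, 3) <= 70)%N.
    rewrite -c3 /count3 -cards_draws; apply: subset_leq_card; apply/subsetP => R.
    rewrite !inE => /andP[RS /eqP R3]; by rewrite R3 (@clique_ie T e S R cl' R3 RS) !eqxx.
  apply/negP; rewrite -ltnNge; exact: leq_trans _ (leq_bin2l 3 h9).
rewrite leqNgt; apply/negP => hlt.
have : (\sum_x degree e x <= \sum_(x : T) 7)%N.
  apply: leq_sum => x _; rewrite -ltnS; apply: leq_ltn_trans hlt; exact: leq_bigmax.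
by rewrite deg_sum // E60 sum_nat_const hT.
Qed.
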